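(* Let $n\ge1$ and for each $i\in[n]$ let $X_i$ have the $\mathrm{Beta}(i,n-i+1)$ distribution, with arbitrary joint distribution. Then for $0<s\le n/2$ the value $t(n,s)$ defined by $s=\sum_{i=1}^n\int_0^{t(n,s)}x\,dF_i(x)$ ($F_i$ the distribution function of $X_i$) equals $(2s/n)^{1/2}$, and $$ \mathbb{E}\Big[\max\Big\{|A|: A\subset[n],\ \sum_{i\in A}X_i\le 1\Big\}\Big]\le \sqrt{2n}. $$ *)

(* Defs.v *)
From HB Require Import structures.
From mathcomp Require Import all_boot all_order all_algebra.
From mathcomp Require Import all_classical all_reals all_analysis.
Set Implicit Arguments. Unset Strict Implicit. Unset Printing Implicit Defensive.
Import Order.TTheory GRing.Theory Num.Theory.
Local Open Scope ring_scope.

Definition maxcount {R : realType} (n : nat) (x : 'I_n -> R) : nat :=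
  \max_(A : {set 'I_n} | \sum_(i in A) x i <= 1) #|A|.

(* Main.v *)
Require Import Defs.
From HB Require Import structures.
From mathcomp Require Import all_boot all_order all_algebra.
From mathcomp Require Import all_classical all_reals all_analysis.
From mathcomp Require Import ring lra.
From mathcomp Require Import measurable_realfun.
Import Order.TTheory GRing.Theory Num.Theory.
Import numFieldTopology.Exports.
Local Open Scope classical_set_scope.
Local Open Scope ring_scope.
Section S.
Context {R : realType}.

Lemma pdf_term m i (x : R) : (i <= m)%N -> 0 <= x <= 1 ->
  beta_pdf i.+1 (m.+1 - i) x = m.+1%:R * ((1 - x) ^+ (m - i) * x ^+ i *+ 'C(m, i)).
Proof.
move=> im x01.
rewrite /beta_pdf patchE ifT; last by rewrite inE /= in_itv.
rewrite subSn // /XMonemX /= beta_fun_fact subnKC //.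
have hb := bin_fact im.
have f0 k : (k`!%:R : R) != 0 by rewrite pnatr_eq0 -lt0n fact_gt0.
rewrite factS -mulr_natr -hb !natrM.
have c0 : ('C(m, i)%:R : R) != 0 by rewrite pnatr_eq0 -lt0n bin_gt0.
have h1 : (1 + m%:R : R) != 0 by rewrite addrC natr1 pnatr_eq0.
field.
by rewrite !f0 c0 h1.
Qed.

Lemma pdf_sum m (x : R) : 0 <= x <= 1 ->
  \sum_(i < m.+1) beta_pdf i.+1 (m.+1 - i) x = m.+1%:R.
Proof.
move=> x01.
rewrite (eq_bigr (fun i : 'I_m.+1 => m.+1%:R * ((1 - x) ^+ (m - i) * x ^+ i *+ 'C(m, i)))); last first.
  by move=> i _; rewrite pdf_term // -ltnS.
by rewrite -mulr_sumr -exprDn subrK expr1n mulr1.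
Qed.
Local Notation mu := (@lebesgue_measure R).

Lemma sum_beta_int m (t M : R) (h : R -> R) : 0 <= t <= 1 ->
  measurable_fun `[0%R, t] h -> 0 <= M ->
  (forall x, 0 <= x <= t -> 0 <= h x <= M) ->
  (\sum_(i < m.+1) \int[beta_prob i.+1 (m.+1 - i)]_(x in `[0%R, t]) (h x)%:E =
   \int[mu]_(x in `[0%R, t]) (m.+1%:R * h x)%:E)%E.
Proof.
move=> /andP[t0 t1] mh M0 hb.
have mh' := (measurable_realfun.measurable_EFinP _ _).2 mh.
have hb' x : x \in `[0%R, t] -> 0 <= h x <= M.
  by rewrite in_itv /= => /hb.
transitivity (\sum_(i < m.+1) \int[mu]_(x in `[0%R, t]) ((h x)%:E * (beta_pdf i.+1 (m.+1 - i) x)%:E))%E.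
  apply: eq_bigr => i _.
  rewrite integral_beta_prob //.
  apply: (@le_lt_trans _ _ (M%:E * (beta_prob i.+1 (m.+1 - i) `[0%R, t]))%E).
    apply: integral_le_bound => //.
    apply: aeW => x /= /hb' /andP[h0 hM].
    by rewrite lee_fin ger0_norm.
  by rewrite -(fineK (beta_prob_fin_num _ _ _)) // -EFinM ltry.
rewrite -(@ge0_integral_sum _ _ _ mu _ (measurable_itv _) _ (fun (i : 'I_m.+1) x => ((h x)%:E * (beta_pdf i.+1 (m.+1 - i) x)%:E)%E)); last first.
- move=> i x /= /hb' /andP[h0 _]; rewrite -EFinM lee_fin mulr_ge0 //.
  exact: beta_pdf_ge0.
- move=> i; apply: emeasurable_funM; first exact: mh'.
  apply: measurableT_comp => //.
  have := @measurable_beta_pdf R i.+1 (m.+1 - i).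
  exact: measurable_funTS.
apply: eq_integral => x; rewrite inE /= in_itv /= => /andP[x0 xt].
rewrite (_ : (\sum_(k < m.+1) ((h x)%:E * (beta_pdf k.+1 (m.+1 - k) x)%:E))%E =
  (\sum_(k < m.+1) h x * beta_pdf k.+1 (m.+1 - k) x)%:E); last first.
  by rewrite -sumEFin; apply: eq_bigr => k _.
rewrite -mulr_sumr pdf_sum; first by rewrite mulrC.
by rewrite x0 (le_trans xt t1).
Qed.
Lemma int_lin (a b t : R) : 0 < t ->
  (\int[mu]_(x in `[0%R, t]) (a + b * x)%:E = (a * t + b * t ^+ 2 / 2)%:E)%E.
Proof.
move=> t0.
pose p : {poly R} := a *: 'X + (b / 2) *: 'X^2.
have hp x : (p^`()).[x] = a + b * x.
  rewrite /p derivD !derivZ derivX derivXn !hornerE /=.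
  by field.
transitivity (\int[mu]_(x in `[0%R, t]) ((p^`()).[x])%:E)%E.
  by apply: eq_integral => x _; rewrite hp.
rewrite (@continuous_FTC2 _ (fun x => (p^`()).[x]) (horner p)) //.
- rewrite /p !hornerE /=. rewrite -EFinB; congr EFin. by field.
- by apply/continuous_subspaceT => x; exact: continuous_horner.
- split.
  + move=> x _; exact: derivable_horner.
  + by apply: cvg_at_right_filter; exact: continuous_horner.
  + by apply: cvg_at_left_filter; exact: continuous_horner.
- by move=> x _; rewrite -derivE.
Qed.
End S.

Section S.
Context {R : realType}.
Local Notation mu := (@lebesgue_measure R).

Lemma sum_nu_int m (nu : 'I_m.+1 -> {measure set R -> \bar R})
  (hnu : forall i A, measurable A -> nu i A = beta_prob i.+1 (m.+1 - i) A)
  (t M : R) (h : R -> R) : 0 <= t <= 1 ->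
  measurable_fun `[0%R, t] h -> 0 <= M ->
  (forall x, 0 <= x <= t -> 0 <= h x <= M) ->
  (\sum_(i < m.+1) \int[nu i]_(x in `[0%R, t]) (h x)%:E =
   \int[mu]_(x in `[0%R, t]) (m.+1%:R * h x)%:E)%E.
Proof.
move=> t01 mh M0 hb; rewrite -(@sum_beta_int R m t M h t01 mh M0 hb).
apply: eq_bigr => i _.
pose idTR : measurableTypeR R -> R := idfun.
have mid : measurable_fun setT idTR := @measurable_id _ _ setT.
transitivity (\int[pushforward (beta_prob i.+1 (m.+1 - i)) idTR]_(x in `[0%R, t]) (h x)%:E)%E.
  apply: eq_measure_integral => A mA _.
  by rewrite hnu // /pushforward preimage_id.
rewrite ge0_integral_pushforward //.
- exact/measurable_realfun.measurable_EFinP.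
- by move=> x; rewrite inE /= in_itv /= => /hb /andP[].
Qed.


Lemma part1 m (nu : 'I_m.+1 -> {measure set R -> \bar R})
  (hnu : forall i A, measurable A -> nu i A = beta_prob i.+1 (m.+1 - i) A)
  (s t : R) : 0 < s -> 0 <= t <= 1 ->
  (s%:E = (\sum_(i < m.+1) \int[nu i]_(x in `[0%R, t]) x%:E)%E
   <-> t = Num.sqrt (2 * s / m.+1%:R)).
Proof.
move=> s0 /andP[t0 t1].
have n0 : (0 : R) < m.+1%:R by rewrite ltr0n.
have q0 : 0 < 2 * s / m.+1%:R by rewrite divr_gt0 // mulr_gt0.
case: (ltgtP 0 t) t0 => // [tp|<-] _; last first.
  have -> : (\sum_(i < m.+1) \int[nu i]_(x in `[0%R, 0%R]) x%:E)%E = 0%E.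
    rewrite big1 // => i _.
    rewrite (eq_integral (fun _ => 0%E)) ?integral0 // => x.
    by rewrite inE /= in_itv /= => /andP[x0 x1]; rewrite (@le_anti _ _ x 0) ?x0 ?x1.
  split => [/eqP|h].
    by rewrite eqe gt_eqF.
  by move: (sqrtr_gt0 (2 * s / m.+1%:R)); rewrite -h q0 ltxx.
have t01 : 0 <= t <= 1 by rewrite t1 ltW.
have hb : forall x, 0 <= x <= t -> 0 <= id x <= 1.
  by move=> x /andP[x0 xt]; rewrite x0 (le_trans xt t1).
have mid : measurable_fun `[0%R, t] (@id R) by [].
rewrite (@sum_nu_int m nu hnu t 1 id t01 mid ler01 hb).
rewrite (_ : (\int[mu]_(x in `[0%R, t]) (m.+1%:R * id x)%:E = \int[mu]_(x in `[0%R, t]) (0 + m.+1%:R * x)%:E)%E); last first.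
  by apply: eq_integral => x _; rewrite add0r.
rewrite int_lin // mul0r add0r.
split => [/eqP|->].
  rewrite eqe => /eqP hs.
  rewrite hs.
  have -> : 2 * (m.+1%:R * t ^+ 2 / 2) / m.+1%:R = t ^+ 2.
    by field; rewrite gt_eqF.
  by rewrite sqrtr_sqr ger0_norm // ltW.
rewrite sqr_sqrtr ?ltW //.
congr EFin.
by field; rewrite gt_eqF.
Qed.
End S.

Section S.
Context {R : realType}.
Local Notation mu := (@lebesgue_measure R).

Lemma mg (t : R) : measurable_fun setT (fun y : R => Num.max (1 - y / t) 0).
Proof.
apply: (@measurable_maxr _ _ _ _ (fun y : R => 1 - y / t) (cst 0)) => //.
apply: measurable_funB => //.
exact: measurable_funM.
Qed.

Lemma beta_neg a b : beta_prob (R:=R) a b `]-oo, 0[ = 0%E.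
Proof.
rewrite -integral_beta_pdf //.
rewrite (eq_integral (fun _ => 0%E)) ?integral0 // => x.
rewrite inE /= in_itv /= => x0.
rewrite /beta_pdf patchE ifF ?mul0r //.
apply/negbTE/negP => /set_mem; rewrite /= in_itv /= => /andP[+ _]; by rewrite leNgt x0.
Qed.


Lemma int_g_le (nu : {measure set R -> \bar R}) a b
  (hnu : forall A, measurable A -> nu A = beta_prob a b A) (t : R) : 0 < t ->
  (\int[nu]_y (Num.max (1 - y / t) 0)%:E <= \int[nu]_(y in `[0%R, t]) (1 - y / t)%:E)%E.
Proof.
move=> t0.
rewrite [leRHS]integral_mkcond.
apply: ae_ge0_le_integral => //.
- by move=> x _; rewrite lee_fin le_max lexx orbT.
- apply/measurable_realfun.measurable_EFinP; exact: mg.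
- move=> x _; rewrite patchE; case: ifPn => // xin.
  have xt : x <= t by move: xin; rewrite inE /= in_itv /= => /andP[].
  by rewrite lee_fin subr_ge0 ler_pdivrMr // mul1r.
- apply/(measurable_restrictT _ _).1 => //.
  apply/measurable_realfun.measurable_EFinP.
  apply: measurable_funB => //.
  exact: measurable_funM.
exists `]-oo, 0[%classic; split => //.
  by rewrite hnu // beta_neg.
move=> x /= hx; rewrite in_itv /=; apply: contra_notT hx => x0 _.
rewrite -leNgt in x0.
rewrite patchE; case: ifPn => [xin|].
  have xt : x <= t by move: xin; rewrite inE /= in_itv /= => /andP[].
  rewrite lee_fin ge_max lexx /= subr_ge0 ler_pdivrMr // mul1r //.
move=> xin.
have tx : t < x.
  rewrite ltNge; apply: contra xin => xt.
  by apply/mem_set; rewrite /= in_itv /= x0 xt.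
have -> : (point : \bar R) = 0%E by [].
rewrite lee_fin ge_max lexx andbT subr_le0 ler_pdivlMr // mul1r ltW //.
Qed.
End S.

Section S.
Context {R : realType}.

Lemma le_int_nm d (T : measurableType d) (m : {measure set T -> \bar R})
  (f1 f2 : T -> \bar R) : (forall x, 0 <= f1 x)%E -> (forall x, f1 x <= f2 x)%E ->
  (\int[m]_x f1 x <= \int[m]_x f2 x)%E.
Proof.
move=> f10 f12.
have f20 x : (0 <= f2 x)%E by apply: le_trans (f10 x) (f12 x).
rewrite !ge0_integralTE //.
apply: ereal_sup_le => _ [h hf1 <-]; exists h => // x.
exact: le_trans (hf1 x) (f12 x).
Qed.

Lemma maxcount_le n (x : 'I_n -> R) (t : R) : 0 < t ->
  ((maxcount x)%:R : R) <= t^-1 + \sum_(i < n) Num.max (1 - x i / t) 0.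
Proof.
move=> t0.
have g0 i : 0 <= Num.max (1 - x i / t) 0 by rewrite le_max lexx orbT.
have B0 : 0 <= t^-1 + \sum_(i < n) Num.max (1 - x i / t) 0.
  apply: addr_ge0; first by rewrite invr_ge0 ltW.
  by apply: sumr_ge0 => i _.
rewrite /maxcount.
apply: (big_ind (fun k : nat => (k%:R : R) <= t^-1 + \sum_(i < n) Num.max (1 - x i / t) 0)) => //.
  by move=> a b ha hb; rewrite /maxn; case: ifP.
move=> A hA.
have e : (#|A|%:R : R) = \sum_(i in A) (1 - x i / t) + t^-1 * \sum_(i in A) x i.
  rewrite mulr_sumr -big_split /=.
  rewrite (eq_bigr (fun _ => 1)); last by move=> i _; field; rewrite gt_eqF.
  by rewrite sumr_const.
rewrite e addrC lerD //.
  by rewrite -[leRHS]mulr1 ler_wpM2l // invr_ge0 ltW.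
rewrite big_mkcond /=.
apply: ler_sum => i _; case: ifP => _; last exact: g0.
by rewrite le_max lexx.
Qed.
End S.

Theorem mainTheorem7 (R : realType) (d : measure_display) (T : measurableType d)
  (P : probability T R) (n : nat) (X : 'I_n -> {RV P >-> R}) :
  (0 < n)%N ->
  (forall (i : 'I_n) (A : set R), measurable A ->
     distribution P (X i) A = beta_prob i.+1 (n - i) A) ->
  (forall s : R, 0 < s -> s <= n%:R / 2 ->
     forall t : R, 0 <= t <= 1 ->
       (s%:E = (\sum_(i < n) \int[distribution P (X i)]_(x in `[0%R, t]) x%:E)%E
        <-> t = Num.sqrt (2 * s / n%:R)))
  /\
  (\int[P]_w ((maxcount (fun i => X i w))%:R : R)%:E <= (Num.sqrt (2 * n%:R))%:E)%E.
Proof.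
case: n X => [//|m] X _ hX.
split.
  move=> s s0 _ t t01.
  exact: (@part1 R m (fun i => distribution P (X i)) hX s t s0 t01).
have mc0 w : (0 <= ((maxcount (fun i : 'I_m.+1 => X i w))%:R : R)%:E)%E.
  by rewrite lee_fin ler0n.
case: m X hX mc0 => [|m] X hX mc0.
  apply: (le_trans (@le_int_nm R _ _ P _ (fun _ => 1%E) mc0 _)).
    move=> w; rewrite lee_fin /maxcount.
    apply: (big_ind (fun k : nat => (k%:R : R) <= 1)) => //.
      by move=> a b ha hb; rewrite /maxn; case: ifP.
    move=> A _; rewrite (ler_nat _ _ 1).
    by have := max_card A; rewrite card_ord.
  rewrite integral_cst //= probability_setT mule1 lee_fin.
  rewrite mulr1 -{1}sqrtr1 ler_sqrt //; lra.
have nR : (0:R) < m.+2%:R by rewrite ltr0n.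
pose t : R := Num.sqrt (2 / m.+2%:R).
have tp : 0 < t by rewrite sqrtr_gt0 divr_gt0.
have t2 : t ^+ 2 = 2 / m.+2%:R by rewrite sqr_sqrtr // ltW // divr_gt0.
have t1 : t <= 1.
  rewrite -sqrtr1 ler_sqrt // ler_pdivrMr // mul1r.
  by rewrite (ler_nat _ 2 m.+2).
pose g (y : R) := Num.max (1 - y / t) 0.
have g0 y : 0 <= g y by rewrite le_max lexx orbT.
have mgX i : measurable_fun setT (fun w => g (X i w)).
  apply: measurableT_comp => //; exact: mg.
apply: (le_trans (@le_int_nm R _ _ P _ (fun w => (t^-1 + \sum_(i < m.+2) g (X i w))%:E) mc0 _)).
  by move=> w; rewrite lee_fin; exact: maxcount_le.
rewrite (eq_integral (fun w => ((t^-1)%:E + \sum_(i < m.+2) (g (X i w))%:E)%E)); last first.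
  by move=> w _; rewrite EFinD sumEFin.
rewrite ge0_integralD //; last first.
- apply: emeasurable_sum => i.
  by apply/measurable_realfun.measurable_EFinP; exact: mgX.
- by move=> w _; rewrite sume_ge0 // => i _; rewrite lee_fin.
- by move=> w _; rewrite lee_fin invr_ge0 ltW.
rewrite integral_cst //= probability_setT mule1.
rewrite ge0_integral_sum //; first last.
- by move=> i w _; rewrite lee_fin.
- by move=> i; apply/measurable_realfun.measurable_EFinP; exact: mgX.
have H i : (\int[P]_w (g (X i w))%:E <=
    \int[distribution P (X i)]_(y in `[0%R, t]) (1 - y / t)%:E)%E.
  rewrite -(@ge0_integral_distribution _ _ _ _ _ _ (X i) (fun y => (g y)%:E)).
  - rewrite /g; apply: (@int_g_le R (distribution P (X i)) i.+1 (m.+2 - i)) => //.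
    by move=> A mA; apply: hX.
  - by apply/measurable_realfun.measurable_EFinP; exact: mg.
  - by move=> y; rewrite lee_fin.
apply: (@le_trans _ _ ((t^-1)%:E + \sum_(i < m.+2) \int[distribution P (X i)]_(y in `[0%R, t]) (1 - y / t)%:E)%E).
  by apply: leeD2l; apply: lee_sum => i _; exact: H.
have t01 : 0 <= t <= 1 by rewrite t1 ltW.
have mh : measurable_fun `[0%R, t] (fun y : R => 1 - y / t).
  by apply: measurable_funB => //; exact: measurable_funM.
have hb : forall x, 0 <= x <= t -> 0 <= 1 - x / t <= 1.
  move=> x /andP[x0 xt]; rewrite subr_ge0 ler_pdivrMr // mul1r xt /=.
  by rewrite gerBl divr_ge0 // ltW.
rewrite (@sum_nu_int R m.+1 (fun i => distribution P (X i)) (fun i A mA => hX i A mA) t 1 (fun y => 1 - y / t) t01 mh ler01 hb).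
rewrite (_ : (\int[lebesgue_measure]_(x in `[0%R, t]) (m.+2%:R * (1 - x / t))%:E =
   \int[lebesgue_measure]_(x in `[0%R, t]) (m.+2%:R + (- (m.+2%:R / t)) * x)%:E)%E); last first.
  apply: eq_integral => x _; congr EFin.
  by field; rewrite gt_eqF.
rewrite int_lin // -EFinD lee_fin.
have tinv : t^-1 = m.+2%:R * t / 2.
  apply: (@mulfI _ t); first by rewrite gt_eqF.
  rewrite mulfV ?gt_eqF //.
  have -> : t * (m.+2%:R * t / 2) = m.+2%:R * t ^+ 2 / 2 by rewrite expr2; field.
  by rewrite t2; field; rewrite gt_eqF.
have sq : Num.sqrt (2 * m.+2%:R) = m.+2%:R * t.
  rewrite -[RHS]ger0_norm ?mulr_ge0 ?ltW // -sqrtr_sqr exprMn t2.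
  by congr Num.sqrt; field; rewrite gt_eqF.
rewrite sq {1}tinv le_eqVlt; apply/orP; left; apply/eqP.
by field; rewrite gt_eqF.
Qed.
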